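(* Let $X$ be a real Banach space, $h:X\to\mathbb R\cup\{+\infty\}$ proper and lower semicontinuous, and $\bar x$ a global minimizer of $h$. Let $p,q\in(1,+\infty)$ with $p^{-1}+q^{-1}=1$ and $\kappa>0$, and define $$Z:=\bigcup_{x\in X}\{\xi\in X^*:\ \xi\in\partial h(x)\ \text{and}\ \|x-\bar x\|\le\kappa\|\xi\|^{q/p}\}.$$ Then for every $\theta\in(0,1]$, $$h(x)\ge h(\bar x)+\frac12\Big(\frac{\theta}{2\kappa}\Big)^{p/q}\|x-\bar x\|^p\quad\text{for every }x\in\bar x+2\kappa\theta^{-1}J_p^{-1}(\overline Z),$$ where $\overline Z$ is the norm closure of $Z$ in $X^*$.
   Context: The (Fenchel–Moreau) subdifferential of $h$ at $x$ is $\partial h(x):=\{\xi\in X^*: x \text{ is a global minimizer on } X \text{ of } h-\langle\xi,\cdot\rangle\}$ (defined for possibly nonconvex $h$). For $p\in[1,\infty)$ the duality mapping is $J_p(x):=\{\xi\in X^*:\langle\xi,x\rangle=\|\xi\|\|x\|,\ \|\xi\|=\|x\|^{p-1}\}$, and for $A\subset X^*$, $J_p^{-1}(A):=\{x\in X: J_p(x)\cap A\neq\emptyset\}$. *)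

(* Defs.v *)
From HB Require Import structures.
From mathcomp Require Import all_boot all_order all_algebra.
From mathcomp Require Import all_classical all_reals all_analysis.
Set Implicit Arguments. Unset Strict Implicit. Unset Printing Implicit Defensive.
Import Order.TTheory GRing.Theory Num.Theory.
Import numFieldNormedType.Exports.
Local Open Scope classical_set_scope.
Local Open Scope ring_scope.

Section Dual.
Context {R : realType} {X : normedModType R}.

Definition is_dual (xi : X -> R) : Prop :=
  (forall (a : R) (x y : X), xi (a *: x + y) = a * xi x + xi y) /\ continuous xi.

Definition dnorm (xi : X -> R) : R :=
  sup [set `|xi x| | x in [set x : X | `|x| <= 1]].

Definition dclosure (Z : set (X -> R)) : set (X -> R) :=
  [set xi | is_dual xi /\
     forall e : R, 0 < e -> exists zeta, Z zeta /\ dnorm (fun x => xi x - zeta x) < e].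

Definition subdiff (h : X -> \bar R) (x : X) : set (X -> R) :=
  [set xi | is_dual xi /\
     forall y : X, (h x - (xi x)%:E <= h y - (xi y)%:E)%E].

Definition Jp (p : R) (x : X) : set (X -> R) :=
  [set xi | is_dual xi /\ xi x = dnorm xi * `|x| /\ dnorm xi = powR `|x| (p - 1)].

Definition Jp_inv (p : R) (A : set (X -> R)) : set X :=
  [set x | exists xi, Jp p x xi /\ A xi].

End Dual.

(* Main.v *)
Require Import Defs.
From HB Require Import structures.
From mathcomp Require Import all_boot all_order all_algebra.
From mathcomp Require Import all_classical all_reals all_analysis.
From mathcomp Require Import ring lra.
Import Order.TTheory GRing.Theory Num.Theory.
Import numFieldNormedType.Exports.
Set Implicit Arguments.
Local Open Scope classical_set_scope.
Local Open Scope ring_scope.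

Section Helpers.
Context {R : realType} {X : normedModType R}.

Lemma dual0 (psi : X -> R) : is_dual psi -> psi 0 = 0.
Proof.
move=> [L _]; have := L 1 0 0; rewrite scale1r addr0 mul1r => H.
by apply: (@addrI _ (psi 0)); rewrite addr0 -H.
Qed.

Lemma dualZ (psi : X -> R) a v : is_dual psi -> psi (a *: v) = a * psi v.
Proof. move=> d; have := d.1 a v 0; by rewrite addr0 dual0 // addr0. Qed.

Lemma dualB (psi : X -> R) u v : is_dual psi -> psi (u - v) = psi u - psi v.
Proof.
move=> d; have := d.1 (-1) v u; rewrite scaleN1r addrC => ->.
by rewrite mulN1r addrC.
Qed.

Lemma dual_bound (psi : X -> R) : is_dual psi ->
  exists M, 0 < M /\ forall v, `|psi v| <= M * `|v|.
Proof.
move=> d; have c0 : psi x @[x --> (0:X)] --> 0.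
  by rewrite -(dual0 d); exact: d.2.
have /nbhs_norm0P [del del0 Hd] : \forall v \near (0:X), `|psi v| < 1.
  have := cvgr_lt (f := fun v => `|psi v|) 0 _ 1 ltr01; apply.
  by apply: cvg_trans (cvg_norm c0) _; rewrite normr0.
exists (2 / del); split; first by rewrite divr_gt0.
move=> v; have [->|v0] := eqVneq v 0; first by rewrite dual0 // !normr0 mulr0.
have nv : 0 < `|v| by rewrite normr_gt0.
set w := (del / (2 * `|v|)) *: v.
have : `|w| < del.
  rewrite /w normrZ ger0_norm ?divr_ge0 ?mulr_ge0 ?ltW //.
  have -> : del / (2 * `|v|) * `|v| = del / 2 by field; rewrite gt_eqF.
  have : 0 < del by []. lra.
move=> /Hd /= H; rewrite /w dualZ // normrM ger0_norm ?divr_ge0 ?mulr_ge0 ?ltW // in H.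
 rewrite -(ler_pM2l (divr_gt0 del0 (mulr_gt0 (ltr0n _ 2) nv))); apply: ltW.
apply: (lt_le_trans H).
have -> : del / (2 * `|v|) * (2 / del * `|v|) = 1 by field; rewrite !gt_eqF.
by [].
Qed.


Lemma dnorm_ub (psi : X -> R) : is_dual psi ->
  has_ubound [set `|psi x| | x in [set x : X | `|x| <= 1]].
Proof.
move=> d; have [M [M0 HM]] := dual_bound d.
exists M => _ [x /= x1 <-]; apply: (le_trans (HM x)).
by rewrite -{2}(mulr1 M) ler_pM2l.
Qed.

Lemma dnorm_ge0 (psi : X -> R) : is_dual psi -> 0 <= dnorm psi.
Proof.
move=> d; have U := ub_le_sup (dnorm_ub d); rewrite /dnorm.
have <- : `|psi 0| = 0 by rewrite dual0 // normr0.
by apply: U; exists 0; rewrite /= ?normr0 ?ler01.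
Qed.

Lemma dual_le (psi : X -> R) v : is_dual psi -> `|psi v| <= dnorm psi * `|v|.
Proof.
move=> d; have [->|v0] := eqVneq v 0; first by rewrite dual0 // !normr0 mulr0.
have nv : 0 < `|v| by rewrite normr_gt0.
have : `|psi (`|v|^-1 *: v)| <= dnorm psi.
  apply: (ub_le_sup (dnorm_ub d)); exists (`|v|^-1 *: v) => //=.
  by rewrite normrZ normrV ?unitfE ?gt_eqF // normr_id mulVf ?gt_eqF.
rewrite dualZ // normrM normrV ?unitfE ?gt_eqF // normr_id.
by rewrite ler_pdivrMl // mulrC.
Qed.

Lemma dnorm_le (psi : X -> R) M : (forall v, `|v| <= 1 -> `|psi v| <= M) ->
  dnorm psi <= M.
Proof.
move=> H; apply: ge_sup; first by exists `|psi 0|, 0 => //=; rewrite normr0.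
by move=> _ [x /= x1 <-]; exact: H.
Qed.

Lemma dual_sub (xi zeta : X -> R) : is_dual xi -> is_dual zeta ->
  is_dual (fun x => xi x - zeta x).
Proof.
move=> [L1 C1] [L2 C2]; split.
  by move=> a x y; rewrite L1 L2; ring.
by move=> x; apply: cvgB; [exact: C1|exact: C2].
Qed.

Lemma dnorm_tri (xi zeta : X -> R) : is_dual xi -> is_dual zeta ->
  dnorm zeta <= dnorm xi + dnorm (fun x => xi x - zeta x).
Proof.
move=> d1 d2; have d3 := dual_sub d1 d2.
apply: dnorm_le => v v1.
have e : zeta v = xi v - (xi v - zeta v) by ring.
rewrite e; apply: (le_trans (ler_normB _ _)); apply: lerD.
  apply: (le_trans (dual_le v d1)).
  by rewrite -{2}(mulr1 (dnorm xi)) ler_wpM2l // dnorm_ge0.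
apply: (le_trans (dual_le v d3)).
by rewrite -{2}(mulr1 (dnorm _)) ler_wpM2l // dnorm_ge0.
Qed.

End Helpers.

Lemma powR_cont (R : realType) (a q : R) : 0 < a ->
  powR (a + e) q @[e --> (0:R)] --> powR a q.
Proof.
move=> a0.
have da : derivable (fun x : R => powR x q) a 1.
  by apply: derivable_powR; rewrite in_itv /= a0.
have c : {for a, continuous (fun x : R => powR x q)}.
  exact: differentiable_continuous ((derivable1_diffP _ _).1 da).
have h : (a + e) @[e --> (0:R)] --> a.
  rewrite -{2}(addr0 a); apply: cvgD; [exact: cvg_cst | exact: cvg_id].
exact: (cvg_comp _ _ h c).
Qed.


Theorem lemma2p2 (R : realType) (X : completeNormedModType R)
  (h : X -> \bar R) (xb : X) (p q kappa : R) :
  (forall x, h x <> -oo%E) -> (exists x, h x <> +oo%E) ->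
  lower_semicontinuous h ->
  (forall x, (h xb <= h x)%E) ->
  1 < p -> 1 < q -> p^-1 + q^-1 = 1 -> 0 < kappa ->
  let Z := [set xi : X -> R | exists x : X,
              subdiff h x xi /\ `|x - xb| <= kappa * powR (dnorm xi) (q / p)] in
  forall theta : R, 0 < theta -> theta <= 1 ->
  forall x : X,
    (exists y : X, Jp_inv p (dclosure Z) y /\ x = xb + (2 * kappa / theta) *: y) ->
    (h xb + (2^-1 * powR (theta / (2 * kappa)) (p / q) * powR `|x - xb| p)%:E <= h x)%E.
Proof.
move=> hNoo [x0 hx0] _ hmin p1 q1 pq k0 Z th th0 th1 x
  [y [[xi [[dxi [xiy nxi]] [_ clxi]]] ->]].
set c := 2 * kappa / th.
have c0 : 0 < c by rewrite /c divr_gt0 // mulr_gt0.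
have p0 : 0 < p by apply: lt_trans p1.
have q0 : 0 < q by apply: lt_trans q1.
have nx : `|xb + c *: y - xb| = c * `|y|.
  by rewrite addrAC subrr add0r normrZ gtr0_norm.
rewrite nx.
have pp : p / q = p - 1.
  have e : q^-1 = 1 - p^-1 by rewrite -pq; ring.
  by rewrite e; field; rewrite gt_eqF.
have qp : q / p = q - 1.
  have e : p^-1 = 1 - q^-1 by rewrite -pq; ring.
  by rewrite e; field; rewrite gt_eqF.
have pq' : (p - 1) * q = p by rewrite -pp mulfVK ?gt_eqF.
have T : 2^-1 * powR (th / (2 * kappa)) (p / q) * powR (c * `|y|) p
         = c / 2 * powR `|y| p.
  have -> : th / (2 * kappa) = c^-1 by rewrite /c invf_div.
  rewrite [powR (c * _) _]powRM ?normr_ge0 ?(ltW c0) //.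
  rewrite -(powR_inv1 (ltW c0)) -powRrM mulN1r powRN.
  have -> : powR c p = powR c (p / q) * c.
    rewrite {1}(_ : p = p / q + 1); last by rewrite pp; ring.
    rewrite powRD; first by rewrite (powRr1 (ltW c0)).
    by rewrite (gt_eqF c0) implybT.
  have ne : powR c (p / q) != 0 by rewrite gt_eqF // powR_gt0.
  move: ne (gt_eqF c0); generalize (powR c (p / q)) (powR `|y| p) => P Q ne cn.
  by clear -ne cn; field.
rewrite T.
have [y0|y0] := eqVneq y 0.
  by rewrite y0 scaler0 addr0 normr0 powR0 ?gt_eqF // mulr0 adde0.
have r0 : 0 < `|y| by rewrite normr_gt0.
set r := `|y| in r0 xiy nxi *.
set a := dnorm xi in xiy nxi *.
have a0 : 0 < a by rewrite nxi powR_gt0.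
case Eb : (h xb) => [B| |]; last by have := hNoo xb; rewrite Eb.
  2: by have := hmin x0; rewrite Eb leye_eq => /eqP.
case E : (h (xb + c *: y)) => [A| |]; last by have := hNoo (xb + c *: y); rewrite E.
  2: by rewrite leey.
rewrite -EFinD lee_fin.
rewrite Eb in hmin.
pose g e := c * (a * r - e * r) - kappa * powR (a + e) q.
have claim1 : forall e, 0 < e -> g e <= A - B.
  move=> e e0.
  have [zeta [[xn [[dz sub] hxn]] hz]] := clxi e e0.
  have H1 := sub (xb + c *: y); rewrite E in H1.
  have H3 := le_trans (leeB (hmin xn) (le_refl (zeta xn)%:E)) H1.
  rewrite -!EFinB lee_fin in H3.
  have z1 : zeta (xb + c *: y) = c * zeta y + zeta xb.
    by rewrite [xb + _]addrC dz.1.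
  have z2 : zeta xn - zeta xb <= kappa * powR (dnorm zeta) q.
    rewrite -dualB //; apply: (le_trans (ler_norm _)).
    apply: (le_trans (dual_le _ dz)).
    have dz0 := dnorm_ge0 dz.
    apply: (le_trans (ler_wpM2l dz0 hxn)).
    rewrite mulrCA qp mulr_powRB1 //.
  have z3 : dnorm zeta <= a + e.
    apply: (le_trans (dnorm_tri dxi dz)); rewrite lerD2l ltW //.
  have z4 : powR (dnorm zeta) q <= powR (a + e) q.
    apply: ge0_ler_powR => //; first exact: ltW.
      by rewrite nnegrE dnorm_ge0.
    by rewrite nnegrE addr_ge0 ?ltW.
  have z5 : xi y - zeta y <= e * r.
    apply: (le_trans (ler_norm _)).
    apply: (le_trans (dual_le y (dual_sub dxi dz))).
    by rewrite ler_wpM2r ?ltW.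
  have z6 : c * (a * r - e * r) <= c * zeta y.
    apply: ler_wpM2l; [exact: ltW | rewrite -xiy; lra].
  have z7 : kappa * powR (dnorm zeta) q <= kappa * powR (a + e) q.
    by apply: ler_wpM2l; [exact: ltW|].
  rewrite /g; lra.
have gc : g e @[e --> (0:R)] --> g 0.
  rewrite /g; apply: cvgB.
    apply: cvgM; first exact: cvg_cst.
    apply: cvgB; first exact: cvg_cst.
    apply: cvgM; [exact: cvg_id | exact: cvg_cst].
  apply: cvgM; first exact: cvg_cst.
  rewrite addr0; exact: powR_cont.
have g0 : g 0 <= A - B.
  rewrite leNgt; apply/negP => H.
  have N := cvgr_gt (g 0) (cvg_at_right_filter gc) (A - B) H.
  have [e [e0 He]] : exists e, 0 < e /\ A - B < g e.
    apply: (@filter_ex _ (0:R)^'+).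
    exact: (filterS2 _ (fun e e0 He => conj e0 He) (nbhs_right_gt 0) (N _)).
  by have := claim1 e e0; rewrite leNgt He.
have ar : a * r = powR r p by rewrite nxi mulrC mulr_powRB1 ?ltW.
have aq : powR a q = powR r p by rewrite nxi -powRrM pq'.
move: g0; rewrite /g mul0r subr0 addr0 ar aq.
have Kk : kappa <= c / 2.
  have -> : c / 2 = kappa / th by rewrite /c [2 * kappa / th / 2]mulrAC [2 * kappa / 2]mulrAC divff ?mul1r // pnatr_eq0.
  by rewrite ler_pdivlMr // ler_piMr // ltW.
have P0 : 0 <= powR r p by apply: powR_ge0.
nra.
Qed.
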